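(* There are first-order formulas $\varphi_Q^{\mathrm{bit}}(x,u)$ and $\varphi_R^{\mathrm{bit}}(x,u)$ over binary relation symbols $<,\lhd$ and unary relation symbols $C,Q$ such that for every $n\in\mathbb{N}$ and all $a,b\in[n]$, in the structure $([n],<^n,\lhd^n,C^n,Q^n)$: $\varphi_Q^{\mathrm{bit}}(a,b)$ holds iff the $r(b)$-th bit of the binary representation of $q(a)$ is 1, and $\varphi_R^{\mathrm{bit}}(a,b)$ holds iff the $r(b)$-th bit of the binary representation of $r(a)$ is 1.
   Context: $[n]=\{0,1,\dots,n\}$; $<$ is the usual order on $\mathbb{N}$ and $P^n=P\cap[n]^k$ for a $k$-ary relation $P$ on $\mathbb{N}$. Bits are numbered from 0 at the least significant position. Let $q_i=\frac{i(i+1)}{2}$. For $x\in\mathbb{N}$ let $c(x)=\max\{i: q_i\le x\}$, $q(x)=q_{c(x)}$, $r(x)=x-q(x)$. The linear order $\lhd$: $x\lhd y$ iff $r(x)<r(y)$, or $r(x)=r(y)$ and $c(x)<c(y)$. $C=\{x: 2\nmid\lfloor (c(x)+1)/2^{r(x)}\rfloor\}$, $Q=\{x: 2\nmid\lfloor q_{c(x)+1}/2^{r(x)}\rfloor\}$. *)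

(* Defs.v *)
From mathcomp Require Import all_boot.
Set Implicit Arguments. Unset Strict Implicit. Unset Printing Implicit Defensive.

Definition tri (i : nat) : nat := (i * i.+1) %/ 2.

(* largest k' <= k with tri k' <= x (tri 0 = 0 so always defined) *)
Fixpoint cAux (k x : nat) : nat :=
  if k is k'.+1 then (if tri k <= x then k else cAux k' x) else 0.

(* c(x) = max { i : q_i <= x };  since q_i >= i, the max is <= x *)
Definition cc (x : nat) : nat := cAux x x.
Definition qq (x : nat) : nat := tri (cc x).
Definition rr (x : nat) : nat := x - qq x.

Definition bit (m i : nat) : bool := odd (m %/ 2 ^ i).

Definition lhd (x y : nat) : bool :=
  (rr x < rr y) || ((rr x == rr y) && (cc x < cc y)).

Definition Cset (x : nat) : bool := odd ((cc x).+1 %/ 2 ^ rr x).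
Definition Qset (x : nat) : bool := odd (tri (cc x).+1 %/ 2 ^ rr x).

Inductive form : Type :=
| FEq  : nat -> nat -> form
| FLt  : nat -> nat -> form
| FLhd : nat -> nat -> form
| FC   : nat -> form
| FQ   : nat -> form
| FNot : form -> form
| FAnd : form -> form -> form
| FOr  : form -> form -> form
| FEx  : nat -> form -> form
| FAll : nat -> form -> form.

Definition upd (e : nat -> nat) (v m : nat) : nat -> nat :=
  fun j => if j == v then m else e j.

(* Satisfaction in the structure ([n], <^n, <|^n, C^n, Q^n), [n] = {0,...,n},
   under the assignment e (whose values are meant to lie in [n]). *)
Fixpoint sat (n : nat) (e : nat -> nat) (f : form) : Prop :=
  match f with
  | FEq i j => e i = e j
  | FLt i j => e i < e j
  | FLhd i j => lhd (e i) (e j)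
  | FC i => Cset (e i)
  | FQ i => Qset (e i)
  | FNot g => ~ sat n e g
  | FAnd g h => sat n e g /\ sat n e h
  | FOr g h => sat n e g \/ sat n e h
  | FEx v g => exists m, m <= n /\ sat n (upd e v m) g
  | FAll v g => forall m, m <= n -> sat n (upd e v m) g
  end.

Definition vx : nat := 0.
Definition vu : nat := 1.

(* Main.v *)
Require Import Defs.
From mathcomp Require Import all_boot zify.
Set Implicit Arguments. Unset Strict Implicit.

Lemma triS c : tri c.+1 = tri c + c.+1.
Proof.
rewrite /tri.
have -> : c.+1 * c.+2 = c * c.+1 + c.+1 * 2 by nia.
by rewrite addnC divnMDl // addnC.
Qed.

Lemma tri0 : tri 0 = 0. Proof. by []. Qed.

Lemma tri_mono a b : a <= b -> tri a <= tri b.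
Proof.
move=> /subnKC <-; elim: (b - a) => [|d IH]; first by rewrite addn0.
rewrite addnS triS; lia.
Qed.

Lemma tri_ge c : c <= tri c.
Proof. elim: c => [|c IH] //; rewrite triS; lia. Qed.

Lemma tri_lt_pow c : tri c < 2 ^ c.
Proof.
elim: c => [|c IH] //; rewrite triS expnS.
have := ltn_expl c (ltnSn 1); lia.
Qed.

Lemma cAux_le k x : tri (cAux k x) <= x.
Proof. elim: k => [|k IH] //=; by case: ifP. Qed.

Lemma cAux_max k x i : i <= k -> tri i <= x -> i <= cAux k x.
Proof.
elim: k i => [|k IH] i /=; first by case: i.
case: ifP => H Hik Hi //.
apply: IH => //. rewrite leq_eqVlt in Hik. case/orP: Hik => // /eqP E.
by rewrite E H in Hi.
Qed.

Lemma cc_le x : tri (cc x) <= x.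
Proof. exact: cAux_le. Qed.

Lemma cc_max x i : tri i <= x -> i <= cc x.
Proof. move=> H; apply: cAux_max => //; have := tri_ge i; lia. Qed.

Lemma cc_lt x : x < tri (cc x).+1.
Proof.
rewrite ltnNge; apply/negP => H; have := @cc_max x _ H; lia.
Qed.

Lemma decomp x : x = tri (cc x) + rr x.
Proof. rewrite /rr /qq; have := cc_le x; lia. Qed.

Lemma rr_le x : rr x <= cc x.
Proof. rewrite /rr /qq; have := cc_lt x; rewrite triS; lia. Qed.

Lemma cc_pair c r : r <= c -> cc (tri c + r) = c.
Proof.
move=> Hr; apply/eqP; rewrite eqn_leq cc_max ?leq_addr // andbT.
rewrite leqNgt; apply/negP => H.
have := tri_mono H; have := cc_le (tri c + r); rewrite triS; lia.
Qed.

Lemma rr_pair c r : r <= c -> rr (tri c + r) = r.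
Proof. move=> Hr; rewrite /rr /qq cc_pair //; lia. Qed.

Lemma ltn_pair x y :
  (x < y) = (cc x < cc y) || ((cc x == cc y) && (rr x < rr y)).
Proof.
rewrite {1}(decomp x) {1}(decomp y).
have := rr_le x; have := rr_le y.
case: (ltngtP (cc x) (cc y)) => H /= Hy Hx.
- have := tri_mono H; rewrite triS; lia.
- have := tri_mono H; rewrite triS; lia.
- rewrite H; lia.
Qed.

Lemma eq_pair x y : cc x = cc y -> rr x = rr y -> x = y.
Proof. by move=> H1 H2; rewrite (decomp x) (decomp y) H1 H2. Qed.

Lemma rr0_iff t : rr t = 0 <-> t <= 1 \/ (0 < t /\ lhd t t.-1).
Proof.
case: (leqP t 1) => Ht.
  split=> _; [by left|]. by case: t Ht => [|[|]].
have E := decomp t; have Hr := rr_le t.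
split.
- move=> H0; right; split; first lia.
  move: E; rewrite H0 addn0 => E.
  case Ec: (cc t) E => [|d] E; first by rewrite tri0 in E; lia.
  rewrite triS in E.
  have Hd : 1 <= d by case: d E {Ec} => [|d]; rewrite ?tri0; lia.
  have -> : t.-1 = tri d + d by lia.
  by rewrite /lhd rr_pair // H0 Hd.
- case=> [|[_ H]]; first lia.
  move: H; rewrite /lhd.
  case Er: (rr t) E Hr => [//|r] E Hr.
  have -> : t.-1 = tri (cc t) + r by lia.
  rewrite rr_pair ?cc_pair; try lia.

Qed.

Ltac upds := rewrite /upd ?eqxx /=;
  repeat match goal with |- context [?a == ?b] =>
    rewrite (_ : (a == b) = false); last by apply/eqP; lia end; rewrite ?eqxx /=.

Definition FT i k :=
  FOr (FNot (FEx k (FEx k.+1 (FAnd (FLt k k.+1) (FLt k.+1 i)))))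
      (FEx k (FAnd (FLt k i) (FAnd (FLhd i k)
         (FNot (FEx k.+1 (FAnd (FLt k k.+1) (FLt k.+1 i))))))).
Arguments FT : simpl never.

Lemma sat_T n e i k : i < k -> e i <= n ->
  (sat n e (FT i k) <-> rr (e i) = 0).
Proof.
move=> Hik Hn; rewrite rr0_iff /FT /=; upds.
set t := e i in Hn *.
split.
- case=> [H|[m [Hm [Hmt [Hl H]]]]].
    left; rewrite leqNgt; apply/negP => Ht; apply: H.
    by exists 0; split => //; exists 1; split => //; lia.
  right; split; first lia.
  have -> : t.-1 = m => //.
  apply/eqP; rewrite eqn_leq; apply/andP; split; last lia.
  rewrite leqNgt; apply/negP => Hc; apply: H; exists t.-1; split; lia.
- case=> [Ht|[Ht Hl]].
    left; case=> m [_ [m0 [_ H]]]; lia.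
  right; exists t.-1; split; first lia. split; first lia. split => //.
  case=> m [_ H]; lia.
Qed.
Opaque FT.

Lemma ex_iff n (P Q : nat -> Prop) : (forall m, m <= n -> (P m <-> Q m)) ->
  ((exists m, m <= n /\ P m) <-> (exists m, m <= n /\ Q m)).
Proof. move=> H; split=> [[m [Hm /H]]|[m [Hm /H]]]; eauto. Qed.

Lemma all_iff n (P Q : nat -> Prop) : (forall m, m <= n -> (P m <-> Q m)) ->
  ((forall m, m <= n -> P m) <-> (forall m, m <= n -> Q m)).
Proof. move=> H; split=> H' m Hm; apply/H; auto; apply/H; auto. Qed.

Lemma cc_mono x y : x <= y -> cc x <= cc y.
Proof. move=> H; apply: cc_max; have := cc_le x; lia. Qed.

Ltac rw L := rewrite L; try (by upds; lia).

Definition CLt i j k :=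
  FEx k (FAnd (FT k k.+1) (FAnd (FLt i k) (FOr (FLt k j) (FEq k j)))).
Arguments CLt : simpl never.

Lemma sat_CLt n e i j k : i < k -> j < k -> e i <= n -> e j <= n ->
  (sat n e (CLt i j k) <-> cc (e i) < cc (e j)).
Proof.
move=> Hi Hj Hin Hjn; rewrite /CLt /=; upds.
transitivity (exists m, m <= n /\ rr m = 0 /\ e i < m /\ m <= e j).
  apply: ex_iff => m Hm; rw sat_T; upds; lia.
split.
- case=> t [_ [Ht [H1 H2]]].
  have E := decomp t; rewrite Ht addn0 in E.
  have := cc_mono H2; move: H1; rewrite ltn_pair Ht ltn0 andbF orbF; lia.
- move=> H; exists (tri (cc (e j))).
  have Hl := cc_le (e j).
  have Hc : cc (tri (cc (e j))) = cc (e j) by rewrite -[tri _]addn0 cc_pair.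
  split; first lia. split; first by rewrite -[tri _]addn0 rr_pair.
  by rewrite ltn_pair Hc H.
Qed.

Opaque CLt.

Definition SameRow i j k := FAnd (FNot (CLt i j k)) (FNot (CLt j i k)).
Arguments SameRow : simpl never.

Lemma sat_SameRow n e i j k : i < k -> j < k -> e i <= n -> e j <= n ->
  (sat n e (SameRow i j k) <-> cc (e i) = cc (e j)).
Proof.
move=> Hi Hj Hin Hjn; rewrite /SameRow /= !sat_CLt //; lia.
Qed.
Opaque SameRow.

Lemma and_iff (P Q P' Q' : Prop) : (P <-> P') -> (Q <-> Q') -> (P /\ Q <-> P' /\ Q').
Proof. tauto. Qed.
Lemma or_iff (P Q P' Q' : Prop) : (P <-> P') -> (Q <-> Q') -> (P \/ Q <-> P' \/ Q').
Proof. tauto. Qed.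
Lemma not_iff (P P' : Prop) : (P <-> P') -> (~ P <-> ~ P').
Proof. tauto. Qed.

Definition Half i j k :=
  FAnd (FLhd i j) (FAnd (CLt i j k)
    (FNot (FEx k (FAnd (SameRow k j k.+1) (FAnd (FLt k j) (FLhd i k)))))).

Lemma sat_Half n e i j k : i < k -> j < k -> e i <= n -> e j <= n ->
  (sat n e (Half i j k) <-> rr (e i) = rr (e j) /\ cc (e i) < cc (e j)).
Proof.
move=> Hi Hj Hin Hjn; rewrite /Half /=.
transitivity (lhd (e i) (e j) /\ cc (e i) < cc (e j) /\
  ~ (exists m, m <= n /\ cc m = cc (e j) /\ m < e j /\ lhd (e i) m)).
  apply: and_iff => //; apply: and_iff; first by rewrite sat_CLt.
  apply: not_iff; apply: ex_iff => m Hm; rw sat_SameRow; upds; tauto.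
set y := e i in Hin *; set u := e j in Hjn *.
split.
- case=> [Hl [Hc Hno]]; split => //. move: Hl; rewrite /lhd.
  case/orP => [Hr|/andP [/eqP -> //]].
  exfalso; apply: Hno; exists (tri (cc u) + rr y).
  have Hry := rr_le y.
  have Hcw : cc (tri (cc u) + rr y) = cc u by rewrite cc_pair //; lia.
  have Hrw : rr (tri (cc u) + rr y) = rr y by rewrite rr_pair //; lia.
  have Hwu : tri (cc u) + rr y < u by rewrite ltn_pair Hcw Hrw eqxx Hr orbT.
  split; first lia. split => //. split => //.
  by rewrite /lhd Hrw Hcw eqxx Hc orbT.
- case=> [Hr Hc]; split; first by rewrite /lhd Hr eqxx Hc orbT.
  split => //. case=> w [Hw [Hcw [Hwu Hl]]].
  move: Hwu; rewrite ltn_pair Hcw eqxx ltnn /=.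
  move: Hl; rewrite /lhd Hr; lia.
Qed.
Opaque Half.

Definition SameR i j k := FOr (FEq i j) (FOr (Half i j k) (Half j i k)).

Lemma sat_SameR n e i j k : i < k -> j < k -> e i <= n -> e j <= n ->
  (sat n e (SameR i j k) <-> rr (e i) = rr (e j)).
Proof.
move=> Hi Hj Hin Hjn; rewrite /SameR /= !sat_Half //.
split; first by case=> [->|[[]|[]]].
move=> Hr; case: (ltngtP (cc (e i)) (cc (e j))) => Hc.
- by right; left.
- by right; right.
- by left; apply: eq_pair.
Qed.
Opaque SameR.

Definition PrevRow i j k :=
  FAnd (CLt i j k) (FNot (FEx k (FAnd (CLt i k k.+1) (CLt k j k.+1)))).

Lemma sat_PrevRow n e i j k : i < k -> j < k -> e i <= n -> e j <= n ->
  (sat n e (PrevRow i j k) <-> (cc (e i)).+1 = cc (e j)).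
Proof.
move=> Hi Hj Hin Hjn; rewrite /PrevRow /=.
transitivity (cc (e i) < cc (e j) /\
  ~ (exists m, m <= n /\ cc (e i) < cc m /\ cc m < cc (e j))).
  apply: and_iff; first by rewrite sat_CLt.
  apply: not_iff; apply: ex_iff => m Hm; rw sat_CLt; rw sat_CLt; upds.
split.
- case=> Hc Hno; apply/eqP; rewrite eqn_leq Hc /= leqNgt; apply/negP => H.
  apply: Hno; exists (tri (cc (e i)).+1).
  have Hc' : cc (tri (cc (e i)).+1) = (cc (e i)).+1 by rewrite -[tri _]addn0 cc_pair.
  have := tri_mono (ltnW H); have := cc_le (e j); rewrite Hc'; lia.
- move=> H; split; first lia. case=> m [_ Hm]; lia.
Qed.
Opaque PrevRow.

Definition RowPlus y x k :=
  FAnd (CLt y x k) (FAnd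
    (FAll k (FOr (FNot (SameRow k y k.+1))
       (FEx k.+1 (FAnd (SameRow k.+1 x k.+2) (FAnd (FLt k.+1 x) (SameR k k.+1 k.+2))))))
    (FAll k (FOr (FNot (FAnd (SameRow k x k.+1) (FLt k x)))
       (FEx k.+1 (FAnd (SameRow k.+1 y k.+2) (SameR k.+1 k k.+2)))))).

Lemma sat_RowPlus n e i j k : i < k -> j < k -> e i <= n -> e j <= n ->
  (sat n e (RowPlus i j k) <-> (cc (e i)).+1 = rr (e j)).
Proof.
move=> Hi Hj Hin Hjn; rewrite /RowPlus /=.
transitivity (cc (e i) < cc (e j) /\
  (forall m, m <= n -> ~ (cc m = cc (e i)) \/
     exists m0, m0 <= n /\ cc m0 = cc (e j) /\ m0 < e j /\ rr m = rr m0) /\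
  (forall m, m <= n -> ~ (cc m = cc (e j) /\ m < e j) \/
     exists m0, m0 <= n /\ cc m0 = cc (e i) /\ rr m0 = rr m)).
  apply: and_iff; first by rewrite sat_CLt.
  apply: and_iff; apply: all_iff => m Hm; apply: or_iff.
  - apply: not_iff; rw sat_SameRow; upds.
  - apply: ex_iff => m0 Hm0; rw sat_SameRow; rw sat_SameR; upds; tauto.
  - apply: not_iff; rw sat_SameRow; upds.
  - apply: ex_iff => m0 Hm0; rw sat_SameRow; rw sat_SameR; upds; tauto.
set y := e i in Hin *; set x := e j in Hjn *.
have Hry := rr_le y; have Hrx := rr_le x.
have Hx := decomp x; have Hlex := cc_le x.
split.
- case=> [Hc [H1 H2]].
  have Hv : tri (cc y) + cc y <= n.
    have := tri_mono Hc; rewrite triS; lia.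
  case: (H1 _ Hv) => [|[w [Hw [Hcw [Hwx Hrw]]]]].
    by rewrite cc_pair.
  move: Hwx; rewrite ltn_pair Hcw eqxx ltnn /= -Hrw rr_pair // => Hlt.
  apply/eqP; rewrite eqn_leq Hlt /= leqNgt; apply/negP => Hgt.
  have Hw2 : tri (cc x) + (cc y).+1 <= n by lia.
  have Hcw2 : cc (tri (cc x) + (cc y).+1) = cc x by rewrite cc_pair //; lia.
  have Hrw2 : rr (tri (cc x) + (cc y).+1) = (cc y).+1 by rewrite rr_pair //; lia.
  case: (H2 _ Hw2) => [[]|[v [Hv' [Hcv Hrv]]]].
    by split => //; rewrite ltn_pair Hcw2 eqxx Hrw2 Hgt orbT.
  have := rr_le v; rewrite Hcv Hrv Hrw2; lia.
- move=> Hr; split; first lia. split.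
  + move=> v Hv; case: (eqVneq (cc v) (cc y)) => Hcv; last by left; apply/eqP.
    right; have Hrv := rr_le v.
    have Hcw : cc (tri (cc x) + rr v) = cc x by rewrite cc_pair //; lia.
    have Hrw : rr (tri (cc x) + rr v) = rr v by rewrite rr_pair //; lia.
    exists (tri (cc x) + rr v); split; first lia.
    split => //; split => //. rewrite ltn_pair Hcw eqxx Hrw; lia.
  + move=> w Hw; case: (boolP ((cc w == cc x) && (w < x))) => Hwx;
      last by left; case=> /eqP H1 H2; move: Hwx; rewrite H1 H2.
    right; case/andP: Hwx => /eqP Hcw Hwx.
    move: Hwx; rewrite ltn_pair Hcw eqxx ltnn /= => Hwx.
    have Hcv : cc (tri (cc y) + rr w) = cc y by rewrite cc_pair //; lia.
    have Hrv : rr (tri (cc y) + rr w) = rr w by rewrite rr_pair //; lia.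
    exists (tri (cc y) + rr w); split => //.
    have := tri_mono (_ : (cc y).+1 <= cc x); rewrite triS; lia.
Qed.
Opaque RowPlus.

Definition phiQ :=
  FEx 2 (FAnd (FQ 2) (FAnd (SameR 2 1 3) (PrevRow 2 0 3))).
Definition phiR :=
  FEx 2 (FAnd (FC 2) (FAnd (SameR 2 1 3) (RowPlus 2 0 3))).

Lemma bit_small m i : m < 2 ^ i -> bit m i = false.
Proof. by move=> H; rewrite /bit divn_small. Qed.

Theorem lemma3p4 :
  exists phiQ phiR : form,
    forall (n a b : nat), a <= n -> b <= n ->
    forall e : nat -> nat, (forall j, e j <= n) -> e vx = a -> e vu = b ->
      (sat n e phiQ <-> bit (qq a) (rr b)) /\
      (sat n e phiR <-> bit (rr a) (rr b)).
Proof.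
exists phiQ, phiR => n a b Ha Hb e He Ea Eb.
rewrite /vx /vu in Ea Eb.
have He0 := He 0; have He1 := He 1.
have Hla := cc_le a; have Hra := rr_le a.
split.
- rewrite /phiQ /=.
  transitivity (exists m, m <= n /\ Qset m /\ rr m = rr b /\ (cc m).+1 = cc a).
    apply: ex_iff => m Hm; rw sat_SameR; rw sat_PrevRow; upds; rewrite Ea Eb; tauto.
  split.
  + case=> m [Hm [HQ [Hr Hc]]]; by rewrite /bit /qq -Hc -Hr.
  + move=> H.
    have Hlt : rr b < cc a.
      rewrite ltnNge; apply/negP => Hge; move: H; rewrite bit_small //.
      exact: (leq_trans (tri_lt_pow _) (leq_pexp2l _ Hge)).
    case Ec: (cc a) Hlt H Hla => [//|d] Hlt H Hla'.
    have Hd : rr b <= d by lia.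
    exists (tri d + rr b); rewrite cc_pair // rr_pair //.
    split; first by move: Hla'; rewrite triS; lia.
    split; last by [].
    by rewrite /Qset cc_pair // rr_pair //; move: H; rewrite /bit /qq Ec.
- rewrite /phiR /=.
  transitivity (exists m, m <= n /\ Cset m /\ rr m = rr b /\ (cc m).+1 = rr a).
    apply: ex_iff => m Hm; rw sat_SameR; rw sat_RowPlus; upds; rewrite Ea Eb; tauto.
  split.
  + case=> m [Hm [HC [Hr Hc]]]; by rewrite /bit -Hc -Hr.
  + move=> H.
    have Hlt : rr b < rr a.
      rewrite ltnNge; apply/negP => Hge; move: H; rewrite bit_small //.
      exact: (leq_trans (ltn_expl _ (ltnSn 1)) (leq_pexp2l _ Hge)).
    case Er: (rr a) Hlt H Hra => [//|d] Hlt H Hra'.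
    have Hd : rr b <= d by lia.
    exists (tri d + rr b); rewrite cc_pair // rr_pair //.
    split; first by have := tri_mono Hra'; rewrite triS; lia.
    split; last by [].
    by rewrite /Cset cc_pair // rr_pair //; move: H; rewrite /bit.
Qed.
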